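(* Let $A>0$, $R_0>0$, and let $f(r,\theta)$ be a function defined for $r\ge R_0$ and $\theta\in[0,A]$. Suppose that $\partial f/\partial\theta$ and $\partial^2 f/\partial\theta^2$ tend to zero uniformly as $r\to\infty$. Then for every sufficiently large $r$, the curve $\theta\in[0,A]\mapsto(r\cos\theta, r\sin\theta,\theta+f(r,\theta))$ has total curvature strictly less than $A$. *)

(* Defs.v *)
From Stdlib Require Import Reals.
From Coquelicot Require Import Coquelicot.
Open Scope R_scope.

Definition norm3 (x y z : R) : R := sqrt (x ^ 2 + y ^ 2 + z ^ 2).

Definition speed (c1 c2 c3 : R -> R) (t : R) : R :=
  norm3 (Derive c1 t) (Derive c2 t) (Derive c3 t).

(* curvature kappa = |c' x c''| / |c'|^3 *)
Definition curvature (c1 c2 c3 : R -> R) (t : R) : R :=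
  let x1 := Derive c1 t in let y1 := Derive c2 t in let z1 := Derive c3 t in
  let x2 := Derive_n c1 2 t in let y2 := Derive_n c2 2 t in
  let z2 := Derive_n c3 2 t in
  norm3 (y1 * z2 - z1 * y2) (z1 * x2 - x1 * z2) (x1 * y2 - y1 * x2)
  / (speed c1 c2 c3 t) ^ 3.

Definition total_curvature (c1 c2 c3 : R -> R) (a b : R) : R :=
  RInt (fun t => curvature c1 c2 c3 t * speed c1 c2 c3 t) a b.

(* Main.v *)
Require Import Defs.
From Stdlib Require Import Reals Lra Psatz.
From Coquelicot Require Import Coquelicot.
Open Scope R_scope.

Lemma pw r g h : 0 < r -> Rabs g < 1/4 -> Rabs h < 1/4 ->
  sqrt (r^2*h^2 + r^2*(1+g)^2 + r^4) / (r^2+(1+g)^2)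
    <= 1 - r^2/(2*(r^2+2)^2)/2.
Proof.
intros Hr Hg Hh.
apply Rabs_def2 in Hg; apply Rabs_def2 in Hh.
assert (Hr2 : 0 < r^2) by nra.
set (uu := (1+g)^2).
assert (Hu1 : 9/16 <= uu) by (unfold uu; nra).
assert (Hu2 : uu <= 25/16) by (unfold uu; nra).
assert (Hh2 : h^2 <= 1/16) by nra.
set (Y := r^2 + uu).
assert (HY : 0 < Y) by (unfold Y; nra).
assert (HP : 0 < (r^2+2)^2) by nra.
set (d := r^2/(2*(r^2+2)^2)).
assert (Hd0 : 0 < d) by (unfold d; apply Rdiv_lt_0_compat; nra).
assert (Hdd : d * (2*(r^2+2)^2) = r^2) by (unfold d; field; intro; nra).
assert (HdY : d * Y^2 <= r^2/2).
{ assert (Y^2 <= (r^2+2)^2) by (apply pow_incr; unfold Y; lra). assert (d*Y^2 <= d*(r^2+2)^2) by (apply Rmult_le_compat_l; lra). lra. }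
assert (Hd1 : d <= 1).
{ assert (r^2 <= 2*(r^2+2)^2) by nra. destruct (Rle_dec d 1) as [|Hn]; [assumption|]. exfalso. assert (d*(2*(r^2+2)^2) > 1*(2*(r^2+2)^2)) by (apply Rmult_lt_compat_r; lra). lra. }
assert (HX : r^2*h^2 + r^2*uu + r^4 <= (1-d) * Y^2).
{ assert (r^2*(uu - h^2) >= r^2/2) by nra. assert (0 <= uu^2) by nra. replace (Y^2) with (r^4 + 2*r^2*uu + uu^2) in * by (unfold Y; ring). nra. }
assert (Hc : 0 <= (1 - d/2) * Y) by nra.
apply Rmult_le_reg_r with Y; [lra|].
replace (sqrt (r^2*h^2 + r^2*uu + r^4) / Y * Y) with (sqrt (r^2*h^2 + r^2*uu + r^4)) by (field; lra).
rewrite <- (sqrt_pow2 _ Hc).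
apply sqrt_le_1_alt.
apply Rle_trans with ((1-d)*Y^2); [exact HX|].
assert (0 <= Y^2) by nra. nra.
Qed.
Lemma alg r s c G H x1 y1 z1 x2 y2 z2 :
  x1 = - r * s -> y1 = r * c -> z1 = 1 + G -> x2 = - r * c -> y2 = - r * s ->
  z2 = H -> s^2 + c^2 = 1 -> 0 < r ->
  norm3 (y1*z2 - z1*y2) (z1*x2 - x1*z2) (x1*y2 - y1*x2) / (norm3 x1 y1 z1)^3
    * norm3 x1 y1 z1
  = sqrt (r^2*H^2 + r^2*(1+G)^2 + r^4) / (r^2+(1+G)^2).
Proof.
intros -> -> -> -> -> -> Hsc Hr. unfold norm3.
match goal with |- sqrt ?P1 / sqrt ?P2 ^ 3 * _ = _ =>
  assert (E1 : P1 = r^2*H^2 + r^2*(1+G)^2 + r^4);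
  [ transitivity (r^2*H^2*(s^2+c^2) + r^2*(1+G)^2*(s^2+c^2) + r^4*(s^2+c^2)^2);
    [ring | rewrite Hsc; ring] |];
  assert (E2 : P2 = r^2 + (1+G)^2);
  [ transitivity (r^2*(s^2+c^2) + (1+G)^2); [ring | rewrite Hsc; ring] |]
end.
rewrite E1, E2.
set (Q := r^2 + (1+G)^2).
assert (0 < r^2) by (apply pow_lt; lra). assert (0 <= (1+G)^2) by apply pow2_ge_0.
assert (HQ : 0 < Q) by (unfold Q; lra).
assert (Hq : sqrt Q * sqrt Q = Q) by (apply sqrt_sqrt; lra).
assert (Hq0 : 0 < sqrt Q) by (apply sqrt_lt_R0; lra).
replace (sqrt Q ^ 3) with (Q * sqrt Q)
  by (transitivity ((sqrt Q * sqrt Q) * sqrt Q); [rewrite Hq; ring | ring]).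
field; split; lra.
Qed.

Lemma D1 r t : Derive (fun th => r * cos th) t = - r * sin t.
Proof. apply is_derive_unique. auto_derive; auto; ring. Qed.
Lemma D2 r t : Derive (fun th => r * sin th) t = r * cos t.
Proof. apply is_derive_unique. auto_derive; auto; ring. Qed.
Lemma D1' r t : Derive_n (fun th => r * cos th) 2 t = - r * cos t.
Proof.
change (Derive (Derive (fun th => r * cos th)) t = - r * cos t).
rewrite (Derive_ext _ (fun t => - r * sin t)) by (intro; apply D1).
apply is_derive_unique. auto_derive; auto; ring.
Qed.
Lemma D2' r t : Derive_n (fun th => r * sin th) 2 t = - r * sin t.
Proof.
change (Derive (Derive (fun th => r * sin th)) t = - r * sin t).
rewrite (Derive_ext _ (fun t => r * cos t)) by (intro; apply D2).
apply is_derive_unique. auto_derive; auto; ring.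
Qed.

Lemma cM (f g : R -> R) x : continuous f x -> continuous g x ->
  continuous (fun t => f t * g t) x.
Proof. intros Hf Hg. exact (@continuous_mult R_UniformSpace R_AbsRing f g x Hf Hg). Qed.
Lemma cP (f g : R -> R) x : continuous f x -> continuous g x ->
  continuous (fun t => f t + g t) x.
Proof. intros Hf Hg. exact (@continuous_plus R_UniformSpace R_AbsRing R_NormedModule f g x Hf Hg). Qed.
Lemma cPow (f : R -> R) n x : continuous f x -> continuous (fun t => f t ^ n) x.
Proof.
intro Hf. induction n as [|n IH]; simpl.
- apply continuous_const.
- apply cM; auto.
Qed.
Lemma cDiv (f g : R -> R) x : continuous f x -> continuous g x -> g x <> 0 ->
  continuous (fun t => f t / g t) x.
Proof. intros. apply cM; auto. apply continuous_Rinv_comp; auto. Qed.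

Theorem lemma3p2 (A R0 : R) (f : R -> R -> R) :
  0 < A -> 0 < R0 ->
  (forall r, R0 <= r -> forall th, 0 <= th <= A ->
     ex_derive (f r) th /\ ex_derive (Derive (f r)) th /\
     continuous (Derive_n (f r) 2) th) ->
  (forall eps, 0 < eps -> exists R1, forall r, R0 <= r -> R1 <= r ->
     forall th, 0 <= th <= A ->
       Rabs (Derive (f r) th) < eps /\ Rabs (Derive_n (f r) 2 th) < eps) ->
  exists R1, forall r, R0 <= r -> R1 <= r ->
    total_curvature (fun th => r * cos th) (fun th => r * sin th)
                    (fun th => th + f r th) 0 A < A.
Proof.
intros HA HR0 Hreg Hunif.
destruct (Hunif (1/4)) as [R1 HR1]; [lra|].
exists R1. intros r Hr0 Hr1.
assert (Hr : 0 < r) by lra.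
set (F := fun t => sqrt (r^2*(Derive_n (f r) 2 t)^2 + r^2*(1+Derive (f r) t)^2 + r^4)
                   / (r^2+(1+Derive (f r) t)^2)).
assert (Hc3 : forall t, 0 <= t <= A ->
  Derive (fun th => th + f r th) t = 1 + Derive (f r) t).
{ intros t Ht. rewrite (Derive_plus (fun th => th) (f r)).
  - f_equal. apply Derive_id.
  - apply ex_derive_id.
  - apply (Hreg r Hr0 t Ht). }
assert (Hc3' : forall t, 0 < t < A ->
  Derive_n (fun th => th + f r th) 2 t = Derive_n (f r) 2 t).
{ intros t Ht.
  change (Derive (Derive (fun th => th + f r th)) t = Derive (Derive (f r)) t).
  rewrite (Derive_ext_loc _ (fun u => 1 + Derive (f r) u)).
  - rewrite (Derive_plus (fun _ => 1) (Derive (f r))).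
    + rewrite Derive_const. ring.
    + apply ex_derive_const.
    + apply (Hreg r Hr0 t); lra.
  - apply (filter_imp (fun u => 0 < u /\ u < A)).
    + intros u Hu. apply Hc3. lra.
    + apply filter_and; [apply (open_gt 0 t) | apply (open_lt A t)]; lra. }
assert (Hcont : forall t, 0 <= t <= A -> continuous F t).
{ intros t Ht. destruct (Hreg r Hr0 t Ht) as [_ [Hg Hh]].
  apply ex_derive_continuous in Hg.
  unfold F. apply cDiv.
  - apply continuous_sqrt_comp.
    repeat first [apply continuous_const | apply cP | apply cM | apply cPow | assumption].
  - repeat first [apply continuous_const | apply cP | apply cM | apply cPow | assumption].
  - assert (0 < r^2) by (apply pow_lt; lra). assert (0 <= (1 + Derive (f r) t)^2) by apply pow2_ge_0. lra. }
assert (HexF : ex_RInt F 0 A).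
{ apply (@ex_RInt_continuous R_CompleteNormedModule). intros z Hz.
  rewrite Rmin_left, Rmax_right in Hz by lra. apply Hcont; lra. }
set (d := r^2/(2*(r^2+2)^2)).
assert (Hd : 0 < d) by (unfold d; apply Rdiv_lt_0_compat; nra).
unfold total_curvature.
rewrite (RInt_ext _ F).
- apply Rle_lt_trans with (RInt (fun _ => 1 - d/2) 0 A).
  + apply RInt_le; [lra | exact HexF | apply ex_RInt_const |].
    intros t Ht. unfold F, d.
    destruct (HR1 r Hr0 Hr1 t) as [Hg Hh]; [lra|].
    apply pw; assumption.
  + rewrite RInt_const. unfold scal; simpl; unfold mult; simpl. nra.
- intros t Ht. rewrite Rmin_left, Rmax_right in Ht by lra.
  unfold curvature, speed. cbv zeta.
  apply (alg r (sin t) (cos t)).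
  + apply D1.
  + apply D2.
  + apply Hc3; lra.
  + apply D1'.
  + apply D2'.
  + apply Hc3'; lra.
  + pose proof (sin2_cos2 t) as Hsc. unfold Rsqr in Hsc. lra.
  + exact Hr.
Qed.
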